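(* For $k\ge4$ and $d\in[d_{\mathrm{lbd}}(k),d_{\mathrm{ubd}}(k)]$, $\Psi_d(\frac12-\frac1{2^k})>\frac12-\frac1{2^k}$.
   Context: $\hat\Psi(x)=\frac{1-2x^{k-1}}{1-x^{k-1}}$, $\dot\Psi(v)=\frac{1-v^{d-1}}{2-v^{d-1}}$, $\Psi_d=\dot\Psi\circ\hat\Psi$ ($d$ real). $d_{\mathrm{lbd}}(4)=16.7$, $d_{\mathrm{lbd}}(k)=(2^{k-1}-2)k\log2$ for $k\ge5$; $d_{\mathrm{ubd}}(k)=2^{k-1}k\log2$. *)

(* Defs.v *)
From Stdlib Require Import Reals.
Open Scope R_scope.

Definition Psi_hat (k : nat) (x : R) : R :=
  (1 - 2 * x ^ (k - 1)) / (1 - x ^ (k - 1)).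

(* dot Psi (v) = (1 - v^(d-1)) / (2 - v^(d-1)),  d real; real power via Rpower
   (only used at v > 0) *)
Definition Psi_dot (d : R) (v : R) : R :=
  (1 - Rpower v (d - 1)) / (2 - Rpower v (d - 1)).

Definition Psi (k : nat) (d : R) (x : R) : R := Psi_dot d (Psi_hat k x).

Definition d_lbd (k : nat) : R :=
  if (k =? 4)%nat then 167 / 10
  else (2 ^ (k - 1) - 2) * INR k * ln 2.

Definition d_ubd (k : nat) : R := 2 ^ (k - 1) * INR k * ln 2.

(* Main.v *)
Require Import Defs.
From Stdlib Require Import Reals.
From Stdlib Require Import Lra Lia Psatz ZArith.
Open Scope R_scope.

Lemma bern (t : R) (n : nat) : 0 <= t <= 1 -> 1 - INR n * t <= (1 - t) ^ n.
Proof.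
  intros Ht. induction n as [|n IH].
  - simpl. lra.
  - rewrite S_INR. simpl.
    assert (0 <= INR n) by apply pos_INR.
    assert (0 <= 1 - t) by lra.
    assert ((1 - t) * (1 - INR n * t) <= (1 - t) * (1 - t) ^ n)
      by (apply Rmult_le_compat_l; lra).
    nra.
Qed.

Lemma pow2_big (n : nat) : (5 <= n)%nat -> ((n+1)*(n+1) + (n+1) + 5 <= 2 * 2 ^ n)%nat.
Proof.
  intros H. induction H.
  - simpl. lia.
  - rewrite Nat.pow_succ_r'. nia.
Qed.

Lemma poly_nat (n : nat) : (4 <= n)%nat ->
  (((n+1)*(n+1) + (n+1) + 4) * 2^n < 2 * 2^n * 2^n + 2 * (n+1) * n)%nat.
Proof.
  intros H. destruct (Nat.eq_dec n 4) as [->|Hn].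
  - simpl. lia.
  - assert (H5 := pow2_big n ltac:(lia)).
    assert (0 < 2^n)%nat by (apply Nat.neq_0_lt_0; apply Nat.pow_nonzero; lia).
    nia.
Qed.

Lemma poly_R (n : nat) : (4 <= n)%nat ->
  ((INR n + 1) * (INR n + 1) + (INR n + 1) + 4) * 2 ^ n
  < 2 * 2 ^ n * 2 ^ n + 2 * (INR n + 1) * INR n.
Proof.
  intros H. assert (Hp := lt_INR _ _ (poly_nat n H)).
  rewrite !mult_INR, !plus_INR, !mult_INR, !pow_INR, !plus_INR in Hp.
  assert (E1 : INR 1 = 1) by reflexivity.
  assert (E2 : INR 2 = 2) by (simpl; ring).
  assert (E4 : INR 4 = 4) by (simpl; ring).
  rewrite E1, E2, E4 in Hp.
  lra.
Qed.

Lemma big_ineq : 3410 ^ 157 * 9 ^ 10 < 2 ^ 10 * 3753 ^ 157.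
Proof.
  rewrite !pow_IZR, <- !mult_IZR. apply IZR_lt. vm_compute. reflexivity.
Qed.

Theorem lemma3p4 (k : nat) (d : R) :
  (4 <= k)%nat -> d_lbd k <= d <= d_ubd k ->
  Psi k d (1/2 - 1 / 2 ^ k) > 1/2 - 1 / 2 ^ k.
Proof.
  intros Hk Hd.
  destruct k as [|n]; [lia|].
  unfold Psi, Psi_hat, Psi_dot.
  unfold d_lbd, d_ubd in Hd.
  replace (S n - 1)%nat with n in * by lia.
  assert (HN2 : 2 ^ S n = 2 * 2 ^ n) by (simpl; ring).
  assert (HN8 : 8 <= 2 ^ n).
  { replace 8 with (2 ^ 3) by (simpl; ring). apply Rle_pow; [lra|lia]. }
  set (N := 2 ^ n) in *.
  rewrite HN2.
  set (x := 1/2 - 1/(2*N)).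
  assert (Hx : x = (N - 1) / (2 * N)) by (unfold x; field; lra).
  assert (Hhalf : (1/2) ^ n * N = 1).
  { unfold N. rewrite <- Rpow_mult_distr. replace (1/2*2) with 1 by field. apply pow1. }
  assert (Hx0 : 0 <= x <= 1/2).
  { rewrite Hx. split. apply Rmult_le_pos; [lra| apply Rlt_le, Rinv_0_lt_compat; lra].
    apply (Rmult_le_reg_r (2*N)); [lra|]. unfold Rdiv. rewrite Rmult_assoc, Rinv_l; lra. }
  set (a := x ^ n).
  assert (Ha1 : a <= 1 / N).
  { apply Rle_trans with ((1/2)^n). apply pow_incr; lra.
    apply (Rmult_le_reg_r N); [lra|]. rewrite Hhalf. unfold Rdiv. rewrite Rmult_assoc, Rinv_l; lra. }
  assert (Ha0 : 0 < a).
  { unfold a. apply pow_lt. rewrite Hx. apply Rmult_lt_0_compat; [lra| apply Rinv_0_lt_compat; lra]. }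
  assert (HN1 : 1 / N <= 1/8).
  { apply (Rmult_le_reg_r N); [lra|]. unfold Rdiv. rewrite Rmult_assoc, Rinv_l; lra. }
  set (v := (1 - 2 * a) / (1 - a)).
  assert (Hv0 : 0 < v) by (unfold v; apply Rdiv_lt_0_compat; lra).
  assert (Hv1 : v - 1 <= - a).
  { replace (v - 1) with (- a / (1 - a)) by (unfold v; field; lra).
    apply (Rmult_le_reg_r (1 - a)); [lra|]. unfold Rdiv. rewrite Rmult_assoc, Rinv_l; nra. }
  assert (Hlnv : ln v <= v - 1).
  { assert (H := exp_ineq1_le (ln v)). rewrite exp_ln in H; lra. }
  set (W := Rpower v (d - 1)).
  assert (HW0 : 0 < W) by (unfold W, Rpower; apply exp_pos).
  enough (HW : W < 2 / (N + 1)).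
  { assert (HW' : W * (N + 1) < 2).
    { apply (Rmult_lt_reg_r (/ (N+1))). apply Rinv_0_lt_compat; lra.
      rewrite Rmult_assoc, Rinv_r by lra. lra. }
    assert (HWlt : W < 1) by nra.
    apply Rlt_gt. apply (Rmult_lt_reg_r (2 - W)); [lra|].
    replace ((1 - W) / (2 - W) * (2 - W)) with (1 - W) by (field; lra).
    assert (E : x * (2 - W) = 1 - W - (2 - W * (N + 1)) / (2 * N)) by (rewrite Hx; field; lra).
    rewrite E. assert (0 < (2 - W * (N + 1)) / (2 * N)) by (apply Rdiv_lt_0_compat; lra).
    lra. }
  assert (Hln2N : ln (2 / (N + 1)) = ln 2 - ln (N + 1)).
  { unfold Rdiv. rewrite ln_mult, ln_Rinv; try lra. apply Rinv_0_lt_compat; lra. }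
  unfold W, Rpower.
  rewrite <- (exp_ln (2 / (N + 1))) by (apply Rdiv_lt_0_compat; lra).
  apply exp_increasing.
  destruct (Nat.eq_dec n 3) as [->|Hn3].
  -
    change ((4 =? 4)%nat) with true in Hd.
    assert (EN : N = 8) by (unfold N; simpl; ring).
    assert (Ev : v = 3410 / 3753).
    { unfold v, a. rewrite Hx, EN. simpl. field. }
    assert (Hv1' : v < 1) by lra.
    assert (Hlnv0 : ln v < 0) by (rewrite <- ln_1; apply ln_increasing; lra).
    assert (Hy : Rpower v (157/10) < 2 / 9).
    { set (y := Rpower v (157/10)).
      assert (Hy0 : 0 < y) by (unfold y, Rpower; apply exp_pos).
      assert (Hy10 : y ^ 10 = v ^ 157).
      { rewrite <- (Rpower_pow 10 y Hy0). unfold y. rewrite Rpower_mult.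
        rewrite <- (Rpower_pow 157 v Hv0). f_equal.
        rewrite !INR_IZR_INZ. simpl. field. }
      assert (Hvp : v ^ 157 * 3753 ^ 157 = 3410 ^ 157).
      { rewrite <- Rpow_mult_distr. rewrite Ev. f_equal. field. }
      assert (Hq : (2/9) ^ 10 * 9 ^ 10 = 2 ^ 10).
      { rewrite <- Rpow_mult_distr. f_equal. field. }
      assert (HA : 0 < 3753 ^ 157) by (apply pow_lt; lra).
      assert (HB : 0 < 9 ^ 10) by (apply pow_lt; lra).
      assert (Hlt : v ^ 157 < (2/9) ^ 10).
      { assert (H1 := big_ineq). rewrite <- Hvp, <- Hq in H1.
        apply (Rmult_lt_reg_r (3753 ^ 157 * 9 ^ 10)). nra.
        nra. }
      destruct (Rlt_or_le y (2/9)) as [Hl|Hl]; [exact Hl|].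
      exfalso. assert (HH := pow_incr (2/9) y 10 ltac:(lra)). lra. }
    assert (Hl : ln (Rpower v (157/10)) < ln (2/9)).
    { apply ln_increasing; [unfold Rpower; apply exp_pos| exact Hy]. }
    rewrite ln_Rpower in Hl.
    rewrite EN. replace (2 / (8 + 1)) with (2/9) by field.
    nra.
  -
    replace ((S n =? 4)%nat) with false in Hd by (symmetry; apply Nat.eqb_neq; lia).
    fold N in Hd.
    set (L := ln 2) in *.
    assert (HL : / 2 < L) by apply ln_lt_2.
    set (Nn := INR n).
    assert (HK : INR (S n) = Nn + 1) by (unfold Nn; apply S_INR).
    rewrite HK in Hd.
    assert (HNn : 4 <= Nn) by (unfold Nn; replace 4 with (INR 4) by (simpl; ring); apply le_INR; lia).
    assert (HN16 : 16 <= N).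
    { unfold N. replace 16 with (2 ^ 4) by (simpl; ring). apply Rle_pow; [lra|lia]. }
    assert (Hpoly := poly_R n ltac:(lia)). fold N Nn in Hpoly.
    assert (Hab : (1 / N) * (1 - Nn / N) <= a).
    { unfold a. rewrite Hx.
      replace ((N - 1) / (2 * N)) with ((1/2) * (1 - 1/N)) by (field; lra).
      rewrite Rpow_mult_distr.
      assert (Hb := bern (1/N) n ltac:(split; [apply Rlt_le, Rdiv_lt_0_compat; lra | lra])).
      fold Nn in Hb.
      replace (1/N) with ((1/2)^n) at 1 by (apply (Rmult_eq_reg_r N); [rewrite Hhalf; field|]; lra).
      apply Rmult_le_compat_l. apply pow_le; lra.
      replace (Nn / N) with (Nn * (1/N)) by (field; lra). exact Hb. }
    assert (HlnN : ln (N + 1) <= Nn * L + 1 / N).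
    { replace (N + 1) with (N * (1 + 1/N)) by (field; lra).
      rewrite ln_mult by (try apply Rlt_le; try lra; assert (0 < 1/N) by (apply Rdiv_lt_0_compat; lra); lra).
      unfold N at 1. rewrite ln_pow by lra. fold Nn L.
      assert (H := exp_ineq1_le (ln (1 + 1/N))).
      assert (0 < 1/N) by (apply Rdiv_lt_0_compat; lra).
      rewrite exp_ln in H; lra. }
    rewrite Hln2N. fold L.
    assert (Hlnv2 : ln v <= - a) by lra.
    assert (Hd1 : 0 < d - 1).
    { assert (0 <= (N - 2) * (Nn + 1) * L - 1 - 1). 
      { assert (14 <= N - 2) by lra. assert (5 <= Nn + 1) by lra.
        assert (70 <= (N-2) * (Nn+1)) by nra. nra. }
      lra. }
    assert (Ht : (d - 1) * ln v <= - (d - 1) * a) by nra.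
    set (b := 1 / N * (1 - Nn / N)) in *.
    set (Q := (N - 2) * (Nn + 1) * b - (Nn - 1)).
    assert (HQ : Q * (N * N) > 4 * N).
    { unfold Q, b. replace (((N - 2) * (Nn + 1) * (1 / N * (1 - Nn / N)) - (Nn - 1)) * (N * N))
        with ((N - 2) * (Nn + 1) * (N - Nn) - (Nn - 1) * N * N) by (field; lra).
      nra. }
    assert (HQ' : Q > 4 / N).
    { apply (Rmult_lt_reg_r (N * N)). nra.
      replace (4 / N * (N * N)) with (4 * N) by (field; lra). lra. }
    assert (H4N : 0 < 4 / N) by (apply Rdiv_lt_0_compat; lra).
    assert (HLQ : L * Q > 2 / N).
    { replace (2 / N) with (/2 * (4 / N)) by (field; lra). nra. }
    assert (Hda : (d - 1) * a >= ((N - 2) * (Nn + 1) * L - 1) * a) by nra.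
    assert (Hpos : 0 <= (N - 2) * (Nn + 1) * L) by (assert (0 <= N - 2) by lra; assert (0 < Nn + 1) by lra; nra).
    assert (Hb2 : (N - 2) * (Nn + 1) * L * b <= (N - 2) * (Nn + 1) * L * a) by nra.
    unfold Q in HLQ.
    nra.
Qed.
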